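(* There is an absolute constant $c > 0$ such that for every integer $n > 1$ there exist a set $P$ of $n$ points in the Euclidean plane $\mathbb{R}^2$ and a set $\mathcal{L}$ of $n$ lines in $\mathbb{R}^2$ such that the incidence graph $G = (P \cup \mathcal{L}, I(P,\mathcal{L}))$ contains no cycle of length $10$ (as a subgraph) and \[ |I(P,\mathcal{L})| \geq c\, n^{1+1/15}. \]
   Context: For a finite set $P$ of points and a finite set $\mathcal{L}$ of lines in the plane, $I(P,\mathcal{L}) = \{(p,\ell) \in P \times \mathcal{L} : p \in \ell\}$ is the set of incidences. The incidence graph of $(P,\mathcal{L})$ is the bipartite graph with vertex classes $P$ and $\mathcal{L}$ whose edge set is $I(P,\mathcal{L})$, i.e. $p \in P$ is adjacent to $\ell \in \mathcal{L}$ iff $p \in \ell$. A graph is $C_{10}$-free if it has no subgraph isomorphic to the cycle of length $10$. *)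

(* Defs.v *)
From Stdlib Require Import Reals Arith.
Open Scope R_scope.

Definition point : Type := (R * R)%type.

(* A line is given by an equation a x + b y = c with (a,b) <> (0,0). *)
Record line := mkLine { la : R; lb : R; lc : R }.

Definition is_line (l : line) : Prop := la l <> 0 \/ lb l <> 0.

Definition on_line (p : point) (l : line) : Prop :=
  la l * fst p + lb l * snd p = lc l.

Definition same_line (l1 l2 : line) : Prop :=
  forall p : point, on_line p l1 <-> on_line p l2.

Definition on_lineb (p : point) (l : line) : bool :=
  if Req_EM_T (la l * fst p + lb l * snd p) (lc l) then true else false.

Fixpoint sum_nat (n : nat) (f : nat -> nat) : nat :=
  match n with
  | O => O
  | S k => (sum_nat k f + f k)%nat
  end.

(* |I(P,L)| for P = {P 0,...,P (n-1)}, L = {L 0,...,L (n-1)}. *)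
Definition num_incidences (n : nat) (P : nat -> point) (L : nat -> line) : nat :=
  sum_nat n (fun i => sum_nat n (fun j => if on_lineb (P i) (L j) then 1%nat else 0%nat)).

(* Incidence graph: vertices inl i (point P i) and inr j (line L j), i,j < n;
   p adjacent to l iff p lies on l. *)
Definition inc_adj (n : nat) (P : nat -> point) (L : nat -> line)
    (u v : nat + nat) : Prop :=
  match u, v with
  | inl i, inr j | inr j, inl i => (i < n)%nat /\ (j < n)%nat /\ on_line (P i) (L j)
  | _, _ => False
  end.

Definition has_cycle {V : Type} (adj : V -> V -> Prop) (k : nat) : Prop :=
  exists f : nat -> V,
    (forall i j, (i < k)%nat -> (j < k)%nat -> f i = f j -> i = j) /\
    (forall i, (i < k)%nat -> adj (f i) (f (Nat.modulo (S i) k))).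

Definition C10_free {V : Type} (adj : V -> V -> Prop) : Prop := ~ has_cycle adj 10.

(* Main.v *)
Require Import Defs.
From Stdlib Require Import Reals Arith Lia ZArith Lra Psatz.
Open Scope R_scope.

Open Scope Z_scope.
Lemma sep (a B X : Z) : 0 < B -> Z.abs a < B -> a + B * X = 0 -> a = 0 /\ X = 0.
Proof. intros. destruct (Z.eq_dec X 0). subst; lia. exfalso.
 assert (Z.abs (B*X) >= B) by (rewrite Z.abs_mul; nia). assert (a = - (B*X)) by lia. subst a. rewrite Z.abs_opp in *. lia. Qed.

Lemma vand (t0 t1 t2 t3 t4 a0 a1 a2 a3 a4 : Z) :
  t0+t1+t2+t3+t4 = 0 ->
  t0*a0+t1*a1+t2*a2+t3*a3+t4*a4 = 0 ->
  t0*(a0*a0)+t1*(a1*a1)+t2*(a2*a2)+t3*(a3*a3)+t4*(a4*a4) = 0 ->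
  t0*(a0*a0*a0)+t1*(a1*a1*a1)+t2*(a2*a2*a2)+t3*(a3*a3*a3)+t4*(a4*a4*a4) = 0 ->
  t0*(a0*a0*a0*a0)+t1*(a1*a1*a1*a1)+t2*(a2*a2*a2*a2)+t3*(a3*a3*a3*a3)+t4*(a4*a4*a4*a4) = 0 ->
  t0 <> 0 -> a0 = a1 \/ a0 = a2 \/ a0 = a3 \/ a0 = a4.
Proof.
  intros H0 H1 H2 H3 H4 Ht.
  set (E0 := t0+t1+t2+t3+t4) in *.
  set (E1 := t0*a0+t1*a1+t2*a2+t3*a3+t4*a4) in *.
  set (E2 := t0*(a0*a0)+t1*(a1*a1)+t2*(a2*a2)+t3*(a3*a3)+t4*(a4*a4)) in *.
  set (E3 := t0*(a0*a0*a0)+t1*(a1*a1*a1)+t2*(a2*a2*a2)+t3*(a3*a3*a3)+t4*(a4*a4*a4)) in *.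
  set (E4 := t0*(a0*a0*a0*a0)+t1*(a1*a1*a1*a1)+t2*(a2*a2*a2*a2)+t3*(a3*a3*a3*a3)+t4*(a4*a4*a4*a4)) in *.
  assert (Heq : t0*((a0-a1)*(a0-a2)*(a0-a3)*(a0-a4)) =
     E4 - (a1+a2+a3+a4)*E3 + (a1*a2+a1*a3+a1*a4+a2*a3+a2*a4+a3*a4)*E2
     - (a1*a2*a3+a1*a2*a4+a1*a3*a4+a2*a3*a4)*E1 + (a1*a2*a3*a4)*E0).
  { unfold E0,E1,E2,E3,E4. ring. }
  assert (HZ : t0*((a0-a1)*(a0-a2)*(a0-a3)*(a0-a4)) = 0) by (rewrite Heq, H0, H1, H2, H3, H4; ring). clear Heq. rename HZ into Heq.
  apply Z.mul_eq_0 in Heq. destruct Heq as [Heq|Heq]; [contradiction|].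
  repeat (apply Z.mul_eq_0 in Heq; destruct Heq as [Heq|Heq]); lia.
Qed.

Open Scope Z_scope.
Definition sZ (d a : Z) := a + (5*d*d)*(a*a) + (5*d*d)*(5*d*d*d)*(a*a*a) + (5*d*d)*(5*d*d*d)*(5*d*d*d*d)*(a*a*a*a).

Lemma bnd (t u U d : Z) : 0 <= u <= U -> 1 <= U -> Z.abs t < d -> Z.abs (t*u) < d*U.
Proof. intros. rewrite Z.abs_mul. rewrite (Z.abs_eq u) by lia. nia. Qed.

Lemma pw (a d : Z) : 0 <= a < d -> 0 <= a*a <= d*d /\ 0 <= a*a*a <= d*d*d /\ 0 <= a*a*a*a <= d*d*d*d.
Proof. intros. assert (0 <= a*a <= d*d) by nia. assert (0 <= a*a*a <= d*d*d) by nia. split; [|split]; try assumption. nia. Qed.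

Lemma abs5 x0 x1 x2 x3 x4 U : Z.abs x0 < U -> Z.abs x1 < U -> Z.abs x2 < U -> Z.abs x3 < U -> Z.abs x4 < U -> Z.abs (x0+x1+x2+x3+x4) < 5*U.
Proof. intros. lia. Qed.
Lemma pos2 d : 1 <= d -> 1 <= d*d /\ 1 <= d*d*d /\ 0 < 5*d*d /\ 0 < 5*d*d*d /\ 0 < 5*d*d*d*d.
Proof. intros. assert (1 <= d*d) by nia. assert (1 <= d*d*d) by nia. assert (1 <= d*d*d*d) by nia. repeat split; lia. Qed.

Lemma coreZ d t0 t1 t2 t3 t4 a0 a1 a2 a3 a4 :
  1 <= d ->
  Z.abs t0 < d -> Z.abs t1 < d -> Z.abs t2 < d -> Z.abs t3 < d -> Z.abs t4 < d ->
  t0 <> 0 -> t1 <> 0 -> t2 <> 0 -> t3 <> 0 -> t4 <> 0 ->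
  0 <= a0 < d -> 0 <= a1 < d -> 0 <= a2 < d -> 0 <= a3 < d -> 0 <= a4 < d ->
  a0 <> a1 -> a1 <> a2 -> a2 <> a3 -> a3 <> a4 -> a4 <> a0 ->
  t0+t1+t2+t3+t4 = 0 ->
  t0 * sZ d a0 + t1 * sZ d a1 + t2 * sZ d a2 + t3 * sZ d a3 + t4 * sZ d a4 = 0 -> False.
Proof.
  intros Hd ht0 ht1 ht2 ht3 ht4 nt0 nt1 nt2 nt3 nt4 ha0 ha1 ha2 ha3 ha4 d01 d12 d23 d34 d40 S0 S.
  set (D1 := t0*a0+t1*a1+t2*a2+t3*a3+t4*a4).
  set (D2 := t0*(a0*a0)+t1*(a1*a1)+t2*(a2*a2)+t3*(a3*a3)+t4*(a4*a4)).
  set (D3 := t0*(a0*a0*a0)+t1*(a1*a1*a1)+t2*(a2*a2*a2)+t3*(a3*a3*a3)+t4*(a4*a4*a4)).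
  set (D4 := t0*(a0*a0*a0*a0)+t1*(a1*a1*a1*a1)+t2*(a2*a2*a2*a2)+t3*(a3*a3*a3*a3)+t4*(a4*a4*a4*a4)).
  assert (E : D1 + (5*d*d) * (D2 + (5*d*d*d) * (D3 + (5*d*d*d*d) * D4)) = 0).
  { rewrite <- S. unfold D1, D2, D3, D4, sZ. ring. }
  destruct (pw _ _ ha0) as (p02 & p03 & p04).
  destruct (pw _ _ ha1) as (p12 & p13 & p14).
  destruct (pw _ _ ha2) as (p22 & p23 & p24).
  destruct (pw _ _ ha3) as (p32 & p33 & p34).
  destruct (pw _ _ ha4) as (p42 & p43 & p44).
  destruct (pos2 d Hd) as (q1 & q2 & q3 & q4 & q5).
  assert (B1 : Z.abs D1 < 5*d*d).
  { unfold D1.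
    pose proof (bnd t0 a0 d d ltac:(clear -ha0 ha1 ha2 ha3 ha4 Hd; lia) ltac:(clear - Hd; lia) ht0).
    pose proof (bnd t1 a1 d d ltac:(clear -ha0 ha1 ha2 ha3 ha4 Hd; lia) ltac:(clear - Hd; lia) ht1).
    pose proof (bnd t2 a2 d d ltac:(clear -ha0 ha1 ha2 ha3 ha4 Hd; lia) ltac:(clear - Hd; lia) ht2).
    pose proof (bnd t3 a3 d d ltac:(clear -ha0 ha1 ha2 ha3 ha4 Hd; lia) ltac:(clear - Hd; lia) ht3).
    pose proof (bnd t4 a4 d d ltac:(clear -ha0 ha1 ha2 ha3 ha4 Hd; lia) ltac:(clear - Hd; lia) ht4).
    replace (5*d*d) with (5*(d*d)) by ring. apply abs5; assumption. }
  assert (B2 : Z.abs D2 < 5*d*d*d).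
  { unfold D2.
    pose proof (bnd t0 _ (d*d) d p02 ltac:(assumption) ht0).
    pose proof (bnd t1 _ (d*d) d p12 ltac:(assumption) ht1).
    pose proof (bnd t2 _ (d*d) d p22 ltac:(assumption) ht2).
    pose proof (bnd t3 _ (d*d) d p32 ltac:(assumption) ht3).
    pose proof (bnd t4 _ (d*d) d p42 ltac:(assumption) ht4).
    replace (5*d*d*d) with (5*(d*(d*d))) by ring. apply abs5; assumption. }
  assert (B3 : Z.abs D3 < 5*d*d*d*d).
  { unfold D3.
    pose proof (bnd t0 _ (d*d*d) d p03 ltac:(assumption) ht0).
    pose proof (bnd t1 _ (d*d*d) d p13 ltac:(assumption) ht1).
    pose proof (bnd t2 _ (d*d*d) d p23 ltac:(assumption) ht2).
    pose proof (bnd t3 _ (d*d*d) d p33 ltac:(assumption) ht3).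
    pose proof (bnd t4 _ (d*d*d) d p43 ltac:(assumption) ht4).
    replace (5*d*d*d*d) with (5*(d*(d*d*d))) by ring. apply abs5; assumption. }
  apply sep in E; [|assumption|exact B1]. destruct E as [E1 E].
  apply sep in E; [|assumption|exact B2]. destruct E as [E2 E].
  apply sep in E; [|assumption|exact B3]. destruct E as [E3 E4].
  unfold D1, D2, D3, D4 in *.
  pose proof (vand t0 t1 t2 t3 t4 a0 a1 a2 a3 a4 ltac:(rewrite <- S0; ring) ltac:(rewrite <- E1; ring) ltac:(rewrite <- E2; ring) ltac:(rewrite <- E3; ring) ltac:(rewrite <- E4; ring) nt0) as V0.
  pose proof (vand t1 t2 t3 t4 t0 a1 a2 a3 a4 a0 ltac:(rewrite <- S0; ring) ltac:(rewrite <- E1; ring) ltac:(rewrite <- E2; ring) ltac:(rewrite <- E3; ring) ltac:(rewrite <- E4; ring) nt1) as V1.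
  pose proof (vand t2 t3 t4 t0 t1 a2 a3 a4 a0 a1 ltac:(rewrite <- S0; ring) ltac:(rewrite <- E1; ring) ltac:(rewrite <- E2; ring) ltac:(rewrite <- E3; ring) ltac:(rewrite <- E4; ring) nt2) as V2.
  pose proof (vand t3 t4 t0 t1 t2 a3 a4 a0 a1 a2 ltac:(rewrite <- S0; ring) ltac:(rewrite <- E1; ring) ltac:(rewrite <- E2; ring) ltac:(rewrite <- E3; ring) ltac:(rewrite <- E4; ring) nt3) as V3.
  pose proof (vand t4 t0 t1 t2 t3 a4 a0 a1 a2 a3 ltac:(rewrite <- S0; ring) ltac:(rewrite <- E1; ring) ltac:(rewrite <- E2; ring) ltac:(rewrite <- E3; ring) ltac:(rewrite <- E4; ring) nt4) as V4.
  clear - V0 V1 V2 V3 V4 d01 d12 d23 d34 d40.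
  destruct V0 as [V0|[V0|[V0|V0]]]; try congruence;
  destruct V1 as [V1|[V1|[V1|V1]]]; try congruence;
  destruct V2 as [V2|[V2|[V2|V2]]]; try congruence;
  destruct V3 as [V3|[V3|[V3|V3]]]; try congruence;
  destruct V4 as [V4|[V4|[V4|V4]]]; try congruence.
Qed.

Close Scope Z_scope.

Notation sumN := Defs.sum_nat.

Lemma sum_nat_ext n (f g : nat -> nat) : (forall i, (i < n)%nat -> f i = g i) -> sumN n f = sumN n g.
Proof. induction n; simpl; intros; auto. rewrite IHn by (intros; apply H; lia). rewrite H by lia. auto. Qed.

Lemma sum_nat_add n (f g : nat -> nat) : sumN n (fun i => (f i + g i)%nat) = (sumN n f + sumN n g)%nat.
Proof. induction n; simpl; auto. rewrite IHn. lia. Qed.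

Lemma sum_nat_swap n m (h : nat -> nat -> nat) : sumN n (fun i => sumN m (fun j => h i j)) = sumN m (fun j => sumN n (fun i => h i j)).
Proof. induction n; simpl. { induction m; simpl; auto. rewrite <- IHm; auto. }
 rewrite IHn. rewrite <- sum_nat_add. reflexivity. Qed.

Lemma sum_nat_mono_n n m (f : nat -> nat) : (n <= m)%nat -> (sumN n f <= sumN m f)%nat.
Proof. induction 1; simpl; lia. Qed.

Lemma sum_nat_lower n c (f : nat -> nat) : (forall i, (i < n)%nat -> (c <= f i)%nat) -> (n * c <= sumN n f)%nat.
Proof. induction n; simpl; intros; auto. assert (c <= f n)%nat by (apply H; lia).
 assert (n*c <= sumN n f)%nat by (apply IHn; intros; apply H; lia). lia. Qed.

Lemma sum_nat_ge_term M (h : nat -> nat) c : (c < M)%nat -> (h c <= sumN M h)%nat.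
Proof. induction M; simpl; intros. lia. destruct (Nat.eq_dec c M). subst; lia. assert (h c <= sumN M h)%nat by (apply IHM; lia). lia. Qed.

Lemma sum_nat_app a b (f : nat -> nat) : sumN (a + b) f = (sumN a f + sumN b (fun i => f (a + i)%nat))%nat.
Proof. induction b; simpl. rewrite Nat.add_0_r; lia. rewrite Nat.add_succ_r. simpl. rewrite IHb. lia. Qed.

Lemma sum_nat_block d M (f : nat -> nat) : sumN (d * M) f = sumN M (fun y => sumN d (fun x => f (x + d * y)%nat)).
Proof. induction M; simpl. rewrite Nat.mul_0_r; auto.
 replace (d * S M)%nat with (d*M + d)%nat by lia. rewrite sum_nat_app, IHM. f_equal.
 apply sum_nat_ext; intros. f_equal. lia. Qed.

Definition sl (d a : nat) : nat := (a + (5*d*d)*(a*a) + (5*d*d)*(5*d*d*d)*(a*a*a) + (5*d*d)*(5*d*d*d)*(5*d*d*d*d)*(a*a*a*a))%nat.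

Lemma sl_Z d a : Z.of_nat (sl d a) = sZ (Z.of_nat d) (Z.of_nat a).
Proof. unfold sl, sZ. rewrite !Nat2Z.inj_add, !Nat2Z.inj_mul. reflexivity. Qed.

Lemma coreN d x0 x1 x2 x3 x4 y0 y1 y2 y3 y4 a0 a1 a2 a3 a4 b0 b1 b2 b3 b4 : (1 <= d)%nat ->
  (x0 < d)%nat -> (x1 < d)%nat -> (x2 < d)%nat -> (x3 < d)%nat -> (x4 < d)%nat ->
  (a0 < d)%nat -> (a1 < d)%nat -> (a2 < d)%nat -> (a3 < d)%nat -> (a4 < d)%nat ->
  y0 = (b0 + sl d a0 * x0)%nat -> y1 = (b0 + sl d a0 * x1)%nat ->
  y1 = (b1 + sl d a1 * x1)%nat -> y2 = (b1 + sl d a1 * x2)%nat ->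
  y2 = (b2 + sl d a2 * x2)%nat -> y3 = (b2 + sl d a2 * x3)%nat ->
  y3 = (b3 + sl d a3 * x3)%nat -> y4 = (b3 + sl d a3 * x4)%nat ->
  y4 = (b4 + sl d a4 * x4)%nat -> y0 = (b4 + sl d a4 * x0)%nat ->
  x0 <> x1 -> x1 <> x2 -> x2 <> x3 -> x3 <> x4 -> x4 <> x0 ->
  a0 <> a1 -> a1 <> a2 -> a2 <> a3 -> a3 <> a4 -> a4 <> a0 -> False.
Proof.
  intros Hd; intros.
  assert (T : forall x x' y y' a b, y = (b + sl d a * x)%nat -> y' = (b + sl d a * x')%nat ->
     ((Z.of_nat x' - Z.of_nat x) * sZ (Z.of_nat d) (Z.of_nat a) = Z.of_nat y' - Z.of_nat y)%Z).
  { intros. subst. rewrite <- sl_Z. rewrite !Nat2Z.inj_add, !Nat2Z.inj_mul. ring. }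
  pose proof (T _ _ _ _ _ _ H9 H10) as T0.
  pose proof (T _ _ _ _ _ _ H11 H12) as T1.
  pose proof (T _ _ _ _ _ _ H13 H14) as T2.
  pose proof (T _ _ _ _ _ _ H15 H16) as T3.
  pose proof (T _ _ _ _ _ _ H17 H18) as T4.
  apply (coreZ (Z.of_nat d) (Z.of_nat x1 - Z.of_nat x0) (Z.of_nat x2 - Z.of_nat x1)
     (Z.of_nat x3 - Z.of_nat x2) (Z.of_nat x4 - Z.of_nat x3) (Z.of_nat x0 - Z.of_nat x4)
     (Z.of_nat a0) (Z.of_nat a1) (Z.of_nat a2) (Z.of_nat a3) (Z.of_nat a4)); try lia.
Qed.

Lemma cyc_extract n P L : has_cycle (inc_adj n P L) 10 ->
  exists p0 p1 p2 p3 p4 l0 l1 l2 l3 l4 : nat,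
   (on_line (P p0) (L l0) /\ on_line (P p1) (L l0) /\
    on_line (P p1) (L l1) /\ on_line (P p2) (L l1) /\
    on_line (P p2) (L l2) /\ on_line (P p3) (L l2) /\
    on_line (P p3) (L l3) /\ on_line (P p4) (L l3) /\
    on_line (P p4) (L l4) /\ on_line (P p0) (L l4)) /\
   (p0 <> p1 /\ p1 <> p2 /\ p2 <> p3 /\ p3 <> p4 /\ p4 <> p0) /\
   (l0 <> l1 /\ l1 <> l2 /\ l2 <> l3 /\ l3 <> l4 /\ l4 <> l0).
Proof.
  intros [f [Hinj Hadj]].
  pose proof (Hadj 0%nat ltac:(lia)) as H0.
  pose proof (Hadj 1%nat ltac:(lia)) as H1.
  pose proof (Hadj 2%nat ltac:(lia)) as H2.
  pose proof (Hadj 3%nat ltac:(lia)) as H3.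
  pose proof (Hadj 4%nat ltac:(lia)) as H4.
  pose proof (Hadj 5%nat ltac:(lia)) as H5.
  pose proof (Hadj 6%nat ltac:(lia)) as H6.
  pose proof (Hadj 7%nat ltac:(lia)) as H7.
  pose proof (Hadj 8%nat ltac:(lia)) as H8.
  pose proof (Hadj 9%nat ltac:(lia)) as H9.
  simpl in H0, H1, H2, H3, H4, H5, H6, H7, H8, H9.
  assert (D : forall i j, (i < 10)%nat -> (j < 10)%nat -> i <> j -> f i <> f j).
  { intros i j hi hj hij e. apply hij. apply Hinj; auto. }
  destruct (f 0%nat) as [v0|v0] eqn:E0; destruct (f 1%nat) as [v1|v1] eqn:E1; simpl in H0; try contradiction;
  destruct (f 2%nat) as [v2|v2] eqn:E2; simpl in H1; try contradiction;
  destruct (f 3%nat) as [v3|v3] eqn:E3; simpl in H2; try contradiction;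
  destruct (f 4%nat) as [v4|v4] eqn:E4; simpl in H3; try contradiction;
  destruct (f 5%nat) as [v5|v5] eqn:E5; simpl in H4; try contradiction;
  destruct (f 6%nat) as [v6|v6] eqn:E6; simpl in H5; try contradiction;
  destruct (f 7%nat) as [v7|v7] eqn:E7; simpl in H6; try contradiction;
  destruct (f 8%nat) as [v8|v8] eqn:E8; simpl in H7; try contradiction;
  destruct (f 9%nat) as [v9|v9] eqn:E9; simpl in H8; try contradiction; simpl in H9.
  - exists v0, v2, v4, v6, v8, v1, v3, v5, v7, v9.
    repeat split; try tauto; intro e; subst;
    match goal with
    | Ea : f ?i = ?u, Eb : f ?j = ?u |- _ => apply (D i j); [lia|lia|lia|congruence]
    end.
  - exists v1, v3, v5, v7, v9, v2, v4, v6, v8, v0.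
    repeat split; try tauto; intro e; subst;
    match goal with
    | Ea : f ?i = ?u, Eb : f ?j = ?u |- _ => apply (D i j); [lia|lia|lia|congruence]
    end.
Qed.

Open Scope R_scope.

Definition Pt (d W i : nat) : point :=
  if (i <? d * (2 * W))%nat then (INR (i mod d), INR (i / d)) else (INR i, -1).
Definition Ln (d W j : nat) : line :=
  if (j <? d * W)%nat then mkLine (- INR (sl d (j mod d))) 1 (INR (j / d))
  else mkLine 1 0 (- (INR j + 1)).

Lemma onL d W i j : on_line (Pt d W i) (Ln d W j) ->
  (i < d * (2 * W))%nat /\ (j < d * W)%nat /\ (i / d = j / d + sl d (j mod d) * (i mod d))%nat.
Proof.
  unfold Pt, Ln, on_line.
  destruct (Nat.ltb_spec i (d*(2*W))); destruct (Nat.ltb_spec j (d*W)); cbn [fst snd la lb lc]; intro H1.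
  - split; [|split]; auto. apply INR_eq. rewrite plus_INR, mult_INR. rewrite <- H1; ring.
  - pose proof (pos_INR (i mod d)); pose proof (pos_INR j). lra.
  - pose proof (pos_INR i); pose proof (pos_INR j); pose proof (pos_INR (j/d)); pose proof (pos_INR (sl d (j mod d))).
    assert (0 <= INR (sl d (j mod d)) * INR i) by (apply Rmult_le_pos; auto). lra.
  - pose proof (pos_INR i); pose proof (pos_INR j). lra.
Qed.

Lemma onL_conv d W x y j : (1 <= d)%nat -> (x < d)%nat -> (x + d * y < d * (2 * W))%nat -> (j < d * W)%nat ->
  y = (j / d + sl d (j mod d) * x)%nat -> on_line (Pt d W (x + d*y)) (Ln d W j).
Proof.
  intros Hd Hx Hi Hj Hy. unfold Pt, Ln, on_line.
  destruct (Nat.ltb_spec (x + d*y) (d*(2*W))); [|lia].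
  destruct (Nat.ltb_spec j (d*W)); [|lia]. cbn [fst snd la lb lc].
  replace ((x + d*y) mod d)%nat with x. 2:{ rewrite (Nat.mul_comm d y), Nat.Div0.mod_add. rewrite Nat.mod_small; auto. }
  replace ((x + d*y) / d)%nat with y. 2:{ rewrite (Nat.mul_comm d y), Nat.div_add by lia. rewrite Nat.div_small; auto. }
  rewrite Hy, plus_INR, mult_INR. ring.
Qed.

Open Scope R_scope.

Lemma sl_mono d a a' : (a <= a')%nat -> (sl d a <= sl d a')%nat.
Proof. intros. unfold sl.
 assert (a*a <= a'*a')%nat by (apply Nat.mul_le_mono; auto).
 assert (a*a*a <= a'*a'*a')%nat by (apply Nat.mul_le_mono; auto).
 assert (a*a*a*a <= a'*a'*a'*a')%nat by (apply Nat.mul_le_mono; auto).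
 repeat apply Nat.add_le_mono; try apply Nat.mul_le_mono_l; auto. Qed.

Lemma sl_inj d a a' : sl d a = sl d a' -> a = a'.
Proof. intros. destruct (Nat.lt_trichotomy a a') as [h|[h|h]]; auto; exfalso.
 - assert (sl d (S a) <= sl d a')%nat by (apply sl_mono; lia). unfold sl in *.
   assert (a*a <= S a * S a)%nat by (apply Nat.mul_le_mono; lia).
   assert (a*a*a <= S a * S a * S a)%nat by (apply Nat.mul_le_mono; lia).
   assert (a*a*a*a <= S a*S a*S a*S a)%nat by (apply Nat.mul_le_mono; lia).
   assert (5*d*d*(a*a) <= 5*d*d*(S a * S a))%nat by (apply Nat.mul_le_mono_l; auto).
   assert (5*d*d*(5*d*d*d)*(a*a*a) <= 5*d*d*(5*d*d*d)*(S a * S a * S a))%nat by (apply Nat.mul_le_mono_l; auto).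
   assert (5*d*d*(5*d*d*d)*(5*d*d*d*d)*(a*a*a*a) <= 5*d*d*(5*d*d*d)*(5*d*d*d*d)*(S a*S a*S a*S a))%nat by (apply Nat.mul_le_mono_l; auto).
   lia.
 - assert (sl d (S a') <= sl d a)%nat by (apply sl_mono; lia). unfold sl in *.
   assert (a'*a' <= S a' * S a')%nat by (apply Nat.mul_le_mono; lia).
   assert (a'*a'*a' <= S a' * S a' * S a')%nat by (apply Nat.mul_le_mono; lia).
   assert (a'*a'*a'*a' <= S a'*S a'*S a'*S a')%nat by (apply Nat.mul_le_mono; lia).
   assert (5*d*d*(a'*a') <= 5*d*d*(S a' * S a'))%nat by (apply Nat.mul_le_mono_l; auto).
   assert (5*d*d*(5*d*d*d)*(a'*a'*a') <= 5*d*d*(5*d*d*d)*(S a' * S a' * S a'))%nat by (apply Nat.mul_le_mono_l; auto).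
   assert (5*d*d*(5*d*d*d)*(5*d*d*d*d)*(a'*a'*a'*a') <= 5*d*d*(5*d*d*d)*(5*d*d*d*d)*(S a'*S a'*S a'*S a'))%nat by (apply Nat.mul_le_mono_l; auto).
   lia.
Qed.

Lemma Pt_inj d W i j : (1 <= d)%nat -> Pt d W i = Pt d W j -> i = j.
Proof.
  intros Hd. unfold Pt.
  destruct (Nat.ltb_spec i (d*(2*W))); destruct (Nat.ltb_spec j (d*(2*W))); intro E; apply pair_equal_spec in E; destruct E as [E1 E2].
  - apply INR_eq in E1, E2. rewrite (Nat.div_mod_eq i d), (Nat.div_mod_eq j d). lia.
  - pose proof (pos_INR (i/d)). lra.
  - pose proof (pos_INR (j/d)). lra.
  - apply INR_eq; auto.
Qed.

Lemma Ln_is d W j : is_line (Ln d W j).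
Proof. unfold Ln, is_line. destruct (j <? d*W)%nat; simpl; lra. Qed.

Lemma Ln_inj d W i j : (1 <= d)%nat -> same_line (Ln d W i) (Ln d W j) -> i = j.
Proof.
  intros Hd. unfold same_line, Ln, on_line.
  destruct (Nat.ltb_spec i (d*W)); destruct (Nat.ltb_spec j (d*W)); cbn [fst snd la lb lc]; intro HS.
  - pose proof (proj1 (HS (0, INR (i/d))) ltac:(simpl; ring)) as H1. simpl in H1.
    assert (Eb : INR (i/d) = INR (j/d)) by lra. apply INR_eq in Eb.
    pose proof (proj1 (HS (1, INR (sl d (i mod d)) + INR (i/d))) ltac:(simpl; ring)) as H2. simpl in H2.
    assert (Es : INR (sl d (i mod d)) = INR (sl d (j mod d))) by lra. apply INR_eq, sl_inj in Es.
    rewrite (Nat.div_mod_eq i d), (Nat.div_mod_eq j d). lia.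
  - pose proof (proj1 (HS (0, INR (i/d))) ltac:(simpl; ring)) as H1. simpl in H1.
    pose proof (pos_INR j). lra.
  - pose proof (proj2 (HS (0, INR (j/d))) ltac:(simpl; ring)) as H1. simpl in H1.
    pose proof (pos_INR i). lra.
  - pose proof (proj1 (HS (- (INR i + 1), 0)) ltac:(simpl; ring)) as H1. simpl in H1.
    apply INR_eq. lra.
Qed.

Lemma xneq d p q b a : (1 <= d)%nat -> p <> q -> (p/d = b + sl d a*(p mod d))%nat ->
  (q/d = b + sl d a * (q mod d))%nat -> p mod d <> q mod d.
Proof. intros Hd Hpq E1 E2 e. apply Hpq. assert (p/d = q/d)%nat by (rewrite E1, E2, e; reflexivity).
 rewrite (Nat.div_mod_eq p d), (Nat.div_mod_eq q d). lia. Qed.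

Lemma aneq d l l' p : (1 <= d)%nat -> l <> l' -> (p/d = l/d + sl d (l mod d)*(p mod d))%nat ->
  (p/d = l'/d + sl d (l' mod d)*(p mod d))%nat -> l mod d <> l' mod d.
Proof. intros Hd Hl E1 E2 e. apply Hl. rewrite e in E1.
 rewrite (Nat.div_mod_eq l d), (Nat.div_mod_eq l' d). lia. Qed.

Lemma C10 d W n : (1 <= d)%nat -> C10_free (inc_adj n (Pt d W) (Ln d W)).
Proof.
  intros Hd H. apply cyc_extract in H.
  destruct H as (p0 & p1 & p2 & p3 & p4 & l0 & l1 & l2 & l3 & l4 &
    (O0 & O1 & O2 & O3 & O4 & O5 & O6 & O7 & O8 & O9) & (P01 & P12 & P23 & P34 & P40) &
    (L01 & L12 & L23 & L34 & L40)).
  apply onL in O0, O1, O2, O3, O4, O5, O6, O7, O8, O9.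
  destruct O0 as (_ & _ & O0). destruct O1 as (_ & _ & O1). destruct O2 as (_ & _ & O2).
  destruct O3 as (_ & _ & O3). destruct O4 as (_ & _ & O4). destruct O5 as (_ & _ & O5).
  destruct O6 as (_ & _ & O6). destruct O7 as (_ & _ & O7). destruct O8 as (_ & _ & O8).
  destruct O9 as (_ & _ & O9).
  assert (md : forall m, (m mod d < d)%nat) by (intro; apply Nat.mod_upper_bound; lia).
  apply (coreN d (p0 mod d) (p1 mod d) (p2 mod d) (p3 mod d) (p4 mod d)
    (p0/d) (p1/d) (p2/d) (p3/d) (p4/d) (l0 mod d) (l1 mod d) (l2 mod d) (l3 mod d) (l4 mod d)
    (l0/d) (l1/d) (l2/d) (l3/d) (l4/d)); auto.
  all: first [eapply xneq; eauto; fail | eapply aneq; eauto; fail | idtac].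
  apply (xneq d p0 p1 (l0/d) (l0 mod d)); auto.
Qed.

Lemma onlineb_true p l : on_line p l -> on_lineb p l = true.
Proof. unfold on_lineb, on_line. intros. destruct Req_EM_T; auto. Qed.

Lemma count d W n : (1 <= d)%nat -> (1 <= W)%nat -> (d * sl d (d-1) <= W)%nat -> (d*(2*W) <= n)%nat ->
  (d*(d*W) <= num_incidences n (Pt d W) (Ln d W))%nat.
Proof.
  intros Hd HW HS Hn. unfold num_incidences. rewrite sum_nat_swap.
  eapply Nat.le_trans; [|apply sum_nat_mono_n with (n := (d*W)%nat); nia].
  rewrite Nat.mul_comm. apply sum_nat_lower. intros j Hj.
  eapply Nat.le_trans; [|apply sum_nat_mono_n with (n := (d*(2*W))%nat); exact Hn].
  rewrite sum_nat_block, sum_nat_swap.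
  replace d with (d * 1)%nat at 1 by lia.
  apply sum_nat_lower. intros x Hx.
  set (c := (j/d + sl d (j mod d) * x)%nat).
  assert (Hjd : (j / d < W)%nat) by (apply Nat.Div0.div_lt_upper_bound; lia).
  assert (Hsl : (sl d (j mod d) <= sl d (d-1))%nat).
  { apply sl_mono. pose proof (Nat.mod_upper_bound j d ltac:(lia)). lia. }
  assert (Hsx : (sl d (j mod d) * x <= sl d (d-1) * d)%nat) by (apply Nat.mul_le_mono; lia).
  assert (Hc : (c < 2*W)%nat) by (unfold c; lia).
  eapply Nat.le_trans; [|apply (sum_nat_ge_term (2*W) (fun y => if on_lineb (Pt d W (x + d*y)) (Ln d W j) then 1%nat else 0%nat) c Hc)].
  cbv beta. rewrite onlineb_true; auto.
  apply onL_conv; auto; nia.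
Qed.

Open Scope R_scope.

Lemma search (Q : nat -> bool) N : Q 1%nat = true -> Q (S N) = false ->
  exists d, (1 <= d)%nat /\ Q d = true /\ Q (S d) = false.
Proof. induction N; intros H1 H2. congruence.
 destruct (Q (S N)) eqn:E. exists (S N); split; [lia|auto]. apply IHN; auto. Qed.

Lemma sl_bound e : (1 <= e)%nat -> (sl e e <= 156 * e^13)%nat.
Proof. intros He.
 assert (E : sl e e = (e^1 + 5*e^4 + 25*e^8 + 125*e^13)%nat) by (unfold sl; simpl; ring).
 rewrite E.
 assert (e^1 <= e^13)%nat by (apply Nat.pow_le_mono_r; lia).
 assert (e^4 <= e^13)%nat by (apply Nat.pow_le_mono_r; lia).
 assert (e^8 <= e^13)%nat by (apply Nat.pow_le_mono_r; lia).
 lia. Qed.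

Lemma maxbound d : (1 <= d)%nat -> (2*(S d)*(S d * sl (S d) (S d - 1) + 1) <= (4*d)^15)%nat.
Proof. intros Hd. remember (S d) as e eqn:Ee.
 assert (He : (1 <= e)%nat) by lia.
 assert (h1 : (sl e (e-1) <= sl e e)%nat) by (apply sl_mono; lia).
 pose proof (sl_bound e He) as h2.
 assert (h3 : (1 <= e^13)%nat) by (pose proof (Nat.pow_le_mono_l 1 e 13 He) as hh; rewrite Nat.pow_1_l in hh; exact hh).
 remember (e^13)%nat as X eqn:EX.
 assert (h4 : (e * sl e (e-1) <= e * (156 * X))%nat) by (apply Nat.mul_le_mono_l; lia).
 assert (h5 : (1 <= e * X)%nat) by (apply (Nat.mul_le_mono 1 e 1 X); lia).
 assert (h6 : (2*e*(e * sl e (e-1) + 1) <= 2*e*(157 * (e*X)))%nat) by (apply Nat.mul_le_mono_l; lia).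
 assert (h7 : (2*e*(157*(e*X)) = 314 * e^15)%nat) by (rewrite (Nat.pow_succ_r' e 14), (Nat.pow_succ_r' e 13); rewrite EX; ring).
 assert (h8 : (e^15 <= (2*d)^15)%nat) by (apply Nat.pow_le_mono_l; lia).
 assert (h9 : ((4*d)^15 = 2^15 * (2*d)^15)%nat) by (replace (4*d)%nat with (2*(2*d))%nat by lia; apply Nat.pow_mul_l).
 assert (h10 : (314 <= 2^15)%nat).
 { assert (2^9 <= 2^15)%nat by (apply Nat.pow_le_mono_r; lia). assert (2^9 = 512)%nat by reflexivity. lia. }
 assert (h11 : (314 * e^15 <= 2^15 * (2*d)^15)%nat) by (apply Nat.mul_le_mono; auto).
 lia.
Qed.
Theorem theorem1p3 :
  exists c : R, 0 < c /\
    forall n : nat, (1 < n)%nat ->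
      exists (P : nat -> point) (L : nat -> line),
        (forall i j, (i < n)%nat -> (j < n)%nat -> P i = P j -> i = j) /\
        (forall j, (j < n)%nat -> is_line (L j)) /\
        (forall i j, (i < n)%nat -> (j < n)%nat -> same_line (L i) (L j) -> i = j) /\
        C10_free (inc_adj n P L) /\
        c * Rpower (INR n) (1 + 1 / 15) <= INR (num_incidences n P L).
Proof.
  exists (1/16). split; [lra|].
  intros n Hn.
  set (Q := fun d => (2*d*(d * sl d (d-1) + 1) <=? n)%nat).
  destruct (search Q (n-1)) as (d & Hd & Q1 & Q2).
  { unfold Q. apply Nat.leb_le. simpl. unfold sl. simpl. lia. }
  { unfold Q. apply Nat.leb_gt. replace (S (n-1)) with n by lia. nia. }
  unfold Q in Q1, Q2. apply Nat.leb_le in Q1. apply Nat.leb_gt in Q2.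
  set (W := (n / (2*d))%nat).
  assert (HW : (d * sl d (d-1) + 1 <= W)%nat).
  { unfold W. apply Nat.div_le_lower_bound; lia. }
  assert (HdW : (2*d*W <= n)%nat) by (apply Nat.Div0.mul_div_le).
  assert (HnW : (n < 2*d*W + 2*d)%nat).
  { pose proof (Nat.div_mod_eq n (2*d)). pose proof (Nat.mod_upper_bound n (2*d) ltac:(lia)). unfold W. lia. }
  exists (Pt d W), (Ln d W). split; [|split; [|split; [|split]]].
  - intros i j _ _. apply Pt_inj; auto.
  - intros. apply Ln_is.
  - intros i j _ _. apply Ln_inj; auto.
  - apply C10; auto.
  - pose proof (count d W n Hd ltac:(lia) ltac:(lia) ltac:(lia)) as Hc.
    pose proof (maxbound d Hd) as Hm.
    assert (Hn4 : (n < (4*d)^15)%nat) by lia.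
    assert (HI : (d * n <= 4 * (d*(d*W)))%nat) by nia.
    set (I := num_incidences n (Pt d W) (Ln d W)) in *.
    assert (npos : 0 < INR n) by (apply lt_0_INR; lia).
    set (z := Rpower (INR n) (1/15)).
    assert (zpos : 0 < z) by (unfold z, Rpower; apply exp_pos).
    assert (z15 : z ^ 15 = INR n).
    { unfold z. rewrite <- Rpower_pow by (unfold Rpower; apply exp_pos).
      rewrite Rpower_mult. replace (1/15 * INR 15) with 1 by (simpl; field). apply Rpower_1; auto. }
    assert (zb : z < 4 * INR d).
    { destruct (Rlt_or_le z (4 * INR d)) as [h|h]; auto. exfalso.
      assert (hh : (4 * INR d)^15 <= z^15) by (apply pow_incr; split; [pose proof (pos_INR d); lra | exact h]).
      rewrite z15 in hh. apply lt_INR in Hn4. rewrite pow_INR, mult_INR in Hn4. simpl (INR 4) in Hn4. lra. }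
    rewrite Rpower_plus, Rpower_1 by auto. fold z.
    apply le_INR in HI. rewrite !mult_INR in HI. simpl (INR 4) in HI.
    assert (H1 : INR n * z <= INR n * (4 * INR d)) by (apply Rmult_le_compat_l; lra).
    apply le_INR in Hc. rewrite !mult_INR in Hc.
    replace (INR n * (4 * INR d)) with (4 * (INR d * INR n)) in H1 by ring.
    set (A := INR d * INR n) in *. set (B := INR d * (INR d * INR W)) in *. set (C := INR n * z) in *.
    lra.
Qed.
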